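(* Let $(E,\rho)$ be a Polish metric space and $\Psi=\{\Psi(t)\}_{t\geq0}$ an $E$-valued time-homogeneous Markov process with transition semigroup $\{P(t)\}_{t\geq 0}$ and initial distribution $\mu$ on $(\Omega,\mathcal{F},\mathbb{P}_\mu)$. Let $V:E\to[0,\infty)$ be continuous and assume: (a) $\{P(t)\}$ has a unique invariant probability measure $\mu_*$, and there are $\gamma>0$ and $C:\{\nu\in\mathcal{M}_1(E):\int V\,d\nu<\infty\}\to[0,\infty)$ with $d_{\mathrm{FM}}(\nu P(t),\mu_* )\leq C(\nu)e^{-\gamma t}$ for all $t\geq0$ and such $\nu$, where $C(\delta_x)=\varkappa(V(x)+1)^{1/2}$ for some $\varkappa>0$; (b) there exist $A,B\geq 0$, $\Gamma>0$ with $P(t)V^2(x)\leq Ae^{-\Gamma t}V^2(x)+B$ for all $x,t$; (c) $\int_E V^2\,d\mu<\infty$. Fix $g\in\operatorname{Lip}_b(E)$, let $\bar g=g-\int g\,d\mu_*$, $\chi(x)=\int_0^\infty P(t)\bar g(x)\,dt$, and $R(t)=t^{-1/2}(\chi(\Psi(0))-\chi(\Psi(t)))$ for $t>0$. Then $R(t)\to 0$ in $\mathcal{L}^1(\mathbb{P}_\mu)$ as $t\to\infty$.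
   Context: $\mathcal{M}_1(E)$: Borel probability measures; $\operatorname{Lip}_b(E)$: bounded Lipschitz functions with $\|f\|_{\mathrm{BL}}=\max\{\|f\|_\infty,\sup_{x\neq y}|f(x)-f(y)|/\rho(x,y)\}$; $d_{\mathrm{FM}}(\mu,\nu)=\sup\{|\int f\,d\mu-\int f\,d\nu|:\|f\|_{\mathrm{BL}}\leq1\}$. $P(t)f(x)=\int f(y)P(t)(x,dy)$, $\nu P(t)=\int P(t)(x,\cdot)\nu(dx)$; $\Psi(0)\sim\mu$ and $\mathbb{P}_\mu(\Psi(s+t)\in A\mid\mathcal{F}(s))=P(t)(\Psi(s),A)$ for the natural filtration. *)

(* Defs.v *)
From HB Require Import structures.
From mathcomp Require Import all_boot all_order all_algebra.
From mathcomp Require Import all_classical all_reals all_analysis.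
From mathcomp Require Import measurable_realfun.
Set Implicit Arguments. Unset Strict Implicit. Unset Printing Implicit Defensive.
Import Order.TTheory GRing.Theory Num.Theory.
Local Open Scope classical_set_scope.
Local Open Scope ring_scope.

Section metric_defs.
Context {R : realType} {T : Type}.
Variable rho : T -> T -> R.

Definition is_metric : Prop :=
  [/\ forall x y, rho x y = 0 <-> x = y,
      forall x y, rho x y = rho y x &
      forall x y z, rho x z <= rho x y + rho y z].

Definition metric_complete : Prop :=
  forall u : nat -> T,
    (forall e, 0 < e -> exists N, forall m n, (N <= m)%N -> (N <= n)%N ->
        rho (u m) (u n) < e) ->
    exists x, forall e, 0 < e -> exists N, forall n, (N <= n)%N -> rho (u n) x < e.

Definition metric_separable : Prop :=
  exists D : set T, countable D /\
    forall x e, 0 < e -> exists2 y, D y & rho x y < e.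

Definition ropen (A : set T) : Prop :=
  forall x, A x -> exists2 e, 0 < e & forall y, rho x y < e -> A y.

Definition rcontinuous (f : T -> R) : Prop :=
  forall x e, 0 < e -> exists2 d, 0 < d & forall y, rho x y < d -> `|f x - f y| < e.

Definition lip_bounded (f : T -> R) : Prop :=
  (exists M, forall x, `|f x| <= M) /\
  (exists L, forall x y, `|f x - f y| <= L * rho x y).

Definition bl_le1 (f : T -> R) : Prop :=
  (forall x, `|f x| <= 1) /\ (forall x y, `|f x - f y| <= rho x y).
End metric_defs.

Definition metric_borel {R : realType} {d} {E : measurableType d}
  (rho : E -> E -> R) : Prop :=
  @measurable d E = <<s ropen rho >>.

Definition polish_borel {R : realType} {d} {E : measurableType d}
  (rho : E -> E -> R) : Prop :=
  [/\ is_metric rho, metric_complete rho, metric_separable rho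
    & metric_borel rho].

Section markov_defs.
Context {R : realType} {d : measure_display} {E : measurableType d}.
Implicit Types (P : R -> R.-pker E ~> E).

(* nu P(t) := A |-> \int P(t)(x, A) nu(dx) *)
Definition actP P (nu : probability E R) (t : R) : {measure set E -> \bar R} :=
  mkcomp_noparam
    (kprobability (measurable_cst (nu : pprobability E R)
       : measurable_fun [set: unit] _)) (P t) tt.

Definition Pf P (t : R) (f : E -> R) (x : E) : R :=
  fine (\int[P t x]_y (f y)%:E).

Definition transition_semigroup P : Prop :=
  [/\ forall x A, measurable A -> P 0 x A = \d_x A,
      forall s t x A, 0 <= s -> 0 <= t -> measurable A ->
        P (s + t) x A = (\int[P s x]_y (P t y A))%E &
      forall A, measurable A ->
        measurable_fun [set tx : R * E | 0 <= tx.1]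
          ((fun tx : R * E => P tx.1 tx.2 A) : R * E -> \bar R)].

Definition invariant_meas P (nu : probability E R) : Prop :=
  forall t A, 0 <= t -> measurable A -> actP P nu t A = nu A.

Definition dFM (rho : E -> E -> R) (m1 m2 : {measure set E -> \bar R}) : R :=
  sup [set `| fine (\int[m1]_x (f x)%:E) - fine (\int[m2]_x (f x)%:E) |
       | f in [set f | bl_le1 rho f]].

Definition nat_filtration {dO} {Omega : measurableType dO}
  (Psi : R -> Omega -> E) (s : R) : set (set Omega) :=
  <<s [set F | exists r B, [/\ 0 <= r, r <= s, measurable B
                             & F = Psi r @^-1` B] ] >>.

Definition markov_process {dO} {Omega : measurableType dO}
  (Pr : probability Omega R) (Psi : R -> Omega -> E) P
  (mu : probability E R) : Prop :=
  [/\ forall t, 0 <= t -> measurable_fun [set: Omega] (Psi t),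
      forall A, measurable A -> Pr (Psi 0 @^-1` A) = mu A &
      forall s t A F, 0 <= s -> 0 <= t -> measurable A ->
        nat_filtration Psi s F ->
        Pr (F `&` Psi (s + t) @^-1` A) = (\int[Pr]_(w in F) P t (Psi s w) A)%E].

Definition gbar (mustar : probability E R) (g : E -> R) : E -> R :=
  fun y => g y - fine (\int[mustar]_z (g z)%:E).

Definition chi P (mustar : probability E R) (g : E -> R) (x : E) : R :=
  fine (\int[lebesgue_measure]_(t in `[0%R, +oo[) (Pf P t (gbar mustar g) x)%:E).

Definition Rres {dO} {Omega : measurableType dO} (Psi : R -> Omega -> E) P
  (mustar : probability E R) (g : E -> R) (t : R) (w : Omega) : R :=
  (Num.sqrt t)^-1 * (chi P mustar g (Psi 0 w) - chi P mustar g (Psi t w)).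
End markov_defs.

(* Main.v *)
Require Import Defs.
From HB Require Import structures.
From mathcomp Require Import all_boot all_order all_algebra.
From mathcomp Require Import all_classical all_reals all_analysis.
From mathcomp Require Import measurable_realfun.
From mathcomp Require Import lra.
Import Order.TTheory GRing.Theory Num.Theory.
Local Open Scope classical_set_scope.
Local Open Scope ring_scope.


Lemma rcont_meas (R : realType) d (E : measurableType d) (rho : E -> E -> R)
  (f : E -> R) : metric_borel rho -> rcontinuous rho f -> measurable_fun setT f.
Proof.
move=> mb fc; apply: (measurability _ (RGenOInfty.measurableE R)) => //.
move=> /= _ [_ [x ->] <-]; rewrite setTI mb; apply: sub_sigma_algebra.
move=> y /=; rewrite /preimage/= in_itv/= andbT => xy.
have [e e0 he] := fc y (f y - x) ltac:(by rewrite subr_gt0).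
exists e => // z /he; rewrite in_itv/= andbT => H.
have := ler_norm (f y - f z); lra.
Qed.

Lemma le_int_nm d (T : measurableType d) (R : realType)
  (m : {measure set T -> \bar R}) (f g : T -> \bar R) :
  (forall x, 0 <= f x)%E -> (forall x, f x <= g x)%E ->
  (\int[m]_x f x <= \int[m]_x g x)%E.
Proof.
move=> f0 fg; rewrite !ge0_integralTE //; last by move=> x; exact: le_trans (f0 x) (fg x).
apply: le_ereal_sup => _ [h hf <-]; exists h => //= x; exact: le_trans (hf x) (fg x).
Qed.

Lemma abs_int_le d (T : measurableType d) (R : realType)
  (m : {measure set T -> \bar R}) (f h : T -> R) :
  (forall x, `|f x| <= h x) ->
  (`| \int[m]_x (f x)%:E | <= \int[m]_x (h x)%:E)%E.
Proof.
move=> fh.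
have h0 x : 0 <= h x by exact: le_trans (normr_ge0 _) (fh x).
rewrite integralE.
have ap : (0 <= \int[m]_x ((EFin \o f)^\+ x))%E by apply: integral_ge0 => x _.
have an : (0 <= \int[m]_x ((EFin \o f)^\- x))%E by apply: integral_ge0 => x _.
have ah : (\int[m]_x ((EFin \o f)^\+ x) <= \int[m]_x (h x)%:E)%E.
  apply: le_int_nm => x; first exact: funepos_ge0.
  rewrite funeposE /= ge_max; apply/andP; split; rewrite ?lee_fin ?h0 //.
  exact: le_trans (ler_norm _) (fh x).
have bh : (\int[m]_x ((EFin \o f)^\- x) <= \int[m]_x (h x)%:E)%E.
  apply: le_int_nm => x; first exact: funeneg_ge0.
  rewrite funenegE /= ge_max; apply/andP; split; rewrite ?lee_fin ?h0 //.
  apply: le_trans (fh x); rewrite -normrN; exact: ler_norm.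
move: ap an ah bh.
set a := (\int[m]_x _)%E; set b := (\int[m]_x _)%E; set c := (\int[m]_x _)%E.
case: c => [c| |].
- case: a => [a| |] //; case: b => [b| |] //; rewrite !lee_fin => *.
  rewrite ler_norml; apply/andP; split; lra.
- by move=> *; exact: leey.
- by move=> a0 _ /(le_trans a0); rewrite leeNy_eq.
Qed.


Lemma integ_bdd d (T : measurableType d) (R : realType)
  (m : {measure set T -> \bar R}) (f : T -> R) (M : R) :
  (m setT < +oo)%E -> measurable_fun setT f -> (forall x, `|f x| <= M) ->
  m.-integrable setT (EFin \o f).
Proof.
move=> mfin mf fM; apply: measurable_bounded_integrable => //.
exists M; split; first by rewrite num_real.
move=> M' MM' x _ /=; apply: le_trans (fM x) _; exact: ltW.
Qed.

Lemma actP_dirac (R : realType) d (E : measurableType d)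
  (P : R -> R.-pker E ~> E) x t A : measurable A ->
  actP P \d_x t A = P t x A.
Proof.
move=> mA; rewrite /actP /mkcomp_noparam /= /kcomp_noparam /=.
rewrite integral_dirac //; last exact: measurable_kernel.
by rewrite diracT mul1e.
Qed.

Lemma dfm_ge (R : realType) d (E : measurableType d) (rho : E -> E -> R)
  (m1 m2 : {measure set E -> \bar R}) (f : E -> R) :
  m1 setT = 1%E -> m2 setT = 1%E -> bl_le1 rho f ->
  `| fine (\int[m1]_x (f x)%:E) - fine (\int[m2]_x (f x)%:E) | <= dFM rho m1 m2.
Proof.
move=> h1 h2 fb.
have bd (m : {measure set E -> \bar R}) (g : E -> R) : m setT = 1%E ->
    bl_le1 rho g -> `|fine (\int[m]_x (g x)%:E)| <= 1.
  move=> hm [g1 _].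
  have := @abs_int_le _ _ _ m g (fun=> 1) g1; rewrite integral_cst // hm mul1e.
  move: (\int[m]_x _)%E => [r| |] //=; rewrite lee_fin //.
apply: ub_le_sup; last by exists f.
exists 2 => _ [g gb <-].
apply: le_trans (ler_normB _ _) _.
have := bd m1 g h1 gb; have := bd m2 g h2 gb; lra.
Qed.


Lemma Pf_bound (R : realType) d (E : measurableType d) (rho : E -> E -> R)
  (P : R -> R.-pker E ~> E) (mustar : probability E R) (f : E -> R) (c : R) t x :
  0 <= c -> measurable_fun setT f -> bl_le1 rho f ->
  `|Pf P t (gbar mustar (fun y => c * f y)) x| <= c * dFM rho (actP P \d_x t) mustar.
Proof.
move=> c0 mf fb.
have f1 : forall y, `|f y| <= 1 by case: fb.
have iP : (P t x).-integrable setT (EFin \o f).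
  by apply: (@integ_bdd _ _ _ _ f 1 _ mf f1); rewrite prob_kernel ltry.
have iS : mustar.-integrable setT (EFin \o f).
  apply: (@integ_bdd _ _ _ _ f 1 _ mf f1); exact: (le_lt_trans (probability_le1 mustar measurableT) (ltry 1)).
have iPc : (P t x).-integrable setT (EFin \o (fun y => c * f y)).
  apply: (@integ_bdd _ _ _ _ _ c).
  - by rewrite prob_kernel ltry.
  - exact: measurable_funM.
  - by move=> y; rewrite normrM ger0_norm // ler_piMr.
have iPk k : (P t x).-integrable setT (EFin \o (cst k : E -> R)).
  apply: (@integ_bdd _ _ _ _ _ `|k|); [by rewrite prob_kernel ltry|exact: measurable_cst|by move=> y].
rewrite /Pf /gbar.
change (`|Rintegral (P t x) setT (fun y => c * f y - fine (\int[mustar]_z (c * f z)%:E))|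
   <= c * dFM rho (actP P \d_x t) mustar).
rewrite RintegralB //.
rewrite Rintegral_cst // prob_kernel /= mulr1.
change (`|Rintegral (P t x) setT (fun y => c * f y) - Rintegral mustar setT (fun y => c * f y)|
   <= c * dFM rho (actP P \d_x t) mustar).
rewrite !RintegralZl // -mulrBr normrM ger0_norm //; apply: ler_wpM2l => //.
rewrite /Rintegral.
rewrite (@eq_measure_integral _ _ _ _ (actP P \d_x t)); last first.
  by move=> A mA _; rewrite actP_dirac.
apply: dfm_ge => //; last exact: probability_setT.
by rewrite actP_dirac // prob_kernel.
exact: iPk.
Qed.


Lemma fine_abs_le (R : realType) (e : \bar R) (r : R) :
  (`|e| <= r%:E)%E -> `|fine e| <= r.
Proof. by case: e => [e| |] //=; rewrite lee_fin. Qed.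

Lemma exp_int_bound (R : realType) (F : R -> R) (K gam : R) :
  0 <= K -> 0 < gam ->
  (forall t, 0 <= t -> `|F t| <= K * expR (- (gam * t))) ->
  `|fine (\int[@lebesgue_measure R]_(t in `[0%R, +oo[) (F t)%:E)| <= K / gam.
Proof.
move=> K0 g0 FK; apply: fine_abs_le.
rewrite integral_mkcond.
pose G : R -> R := fun t => if 0 <= t then F t else 0.
have -> : (\int[@lebesgue_measure R]_x ((fun t => (F t)%:E) \_ `[0%R, +oo[) x =
           \int[@lebesgue_measure R]_x (G x)%:E)%E.
  by apply: eq_integral => t _; rewrite /G !patchE mem_setE /= in_itv /= andbT; case: ifP.
have HH := (@abs_int_le _ _ _ (@lebesgue_measure R) G
   (fun t => K / gam * exponential_pdf gam t)).
apply: (le_trans (HH _)).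
  move=> t; rewrite /G /exponential_pdf patchE mem_setE /= in_itv /= andbT.
  case: ifPn => t0.
    apply: le_trans (FK t t0) _.
    by rewrite mulrA divfK ?gt_eqF // mulNr.
  by rewrite normr0 mulr0.
rewrite (_ : (fun x => ((K / gam) * exponential_pdf gam x)%:E) =
             (fun x => (K / gam)%:E * (exponential_pdf gam x)%:E)%E); last first.
  by apply/funext => y; rewrite EFinM.
rewrite ge0_integralZl //.
- by rewrite integral_exponential_pdf // mule1.
- apply/measurable_EFinP; apply: measurable_exponential_pdf; exact: ltW.
- by move=> y _; rewrite lee_fin exponential_pdf_ge0 // ltW.
- by rewrite lee_fin divr_ge0 // ltW.
Qed.


Lemma lim_inv_sqrt (R : realType) (K : R) :
  ((Num.sqrt t)^-1 * K)%:E @[t --> +oo%R] --> 0%E.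
Proof.
apply: cvg_EFin; first by near=> t.
apply/cvgrPdist_lt => e e0.
exists ((`|K| / e) ^+ 2); split; first by rewrite num_real.
move=> t ht.
rewrite /= sub0r normrN normrM.
have t0 : 0 < t by apply: le_lt_trans ht; exact: sqr_ge0.
have s0 : 0 < Num.sqrt t by rewrite sqrtr_gt0.
have hs : `|K| / e < Num.sqrt t.
  have h1 : 0 <= `|K| / e by rewrite divr_ge0 // ltW.
  by rewrite -[X in X < _](ger0_norm h1) -sqrtr_sqr (@ltr_sqrt _ _ t).
rewrite ger0_norm ?invr_ge0 ?ltW // mulrC ltr_pdivrMr //.
by move: hs; rewrite ltr_pdivrMr // mulrC.
Unshelve. all: by end_near.
Qed.

Lemma sqrt_le_sq (R : realType) (y : R) : 0 <= y -> Num.sqrt (y + 1) <= y ^+ 2 + 2.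
Proof.
move=> y0.
have s0 := sqrtr_ge0 (y + 1).
have ss : Num.sqrt (y + 1) ^+ 2 = y + 1 by rewrite sqr_sqrtr // addr_ge0.
have := sqr_ge0 (Num.sqrt (y + 1) - 1).
nra.
Qed.

Set Implicit Arguments. Unset Strict Implicit.

Definition kPsi (R : realType) d (E : measurableType d) dO (Omega : measurableType dO)
  (P : R -> R.-pker E ~> E) (Psi0 : Omega -> E) (mPsi : measurable_fun setT Psi0)
  (t : R) : unit * Omega -> {measure set E -> \bar R} :=
  fun uw => P t (Psi0 uw.2).

Lemma kPsi_meas (R : realType) d (E : measurableType d) dO (Omega : measurableType dO)
  (P : R -> R.-pker E ~> E) (Psi0 : Omega -> E) (mPsi : measurable_fun setT Psi0)
  (t : R) U : measurable U -> measurable_fun setT (kPsi P mPsi t ^~ U).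
Proof.
move=> mU; rewrite /kPsi.
apply: (measurableT_comp (measurable_kernel (P t) U mU)).
exact: measurableT_comp mPsi measurable_snd.
Qed.

HB.instance Definition _ (R : realType) d (E : measurableType d) dO
  (Omega : measurableType dO) (P : R -> R.-pker E ~> E) (Psi0 : Omega -> E)
  (mPsi : measurable_fun setT Psi0) (t : R) :=
  isKernel.Build _ _ _ _ R (kPsi P mPsi t) (kPsi_meas P mPsi t).

Lemma kPsi_prob (R : realType) d (E : measurableType d) dO (Omega : measurableType dO)
  (P : R -> R.-pker E ~> E) (Psi0 : Omega -> E) (mPsi : measurable_fun setT Psi0)
  (t : R) x : kPsi P mPsi t x setT = 1%E.
Proof. by rewrite /kPsi prob_kernel. Qed.

HB.instance Definition _ (R : realType) d (E : measurableType d) dO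
  (Omega : measurableType dO) (P : R -> R.-pker E ~> E) (Psi0 : Omega -> E)
  (mPsi : measurable_fun setT Psi0) (t : R) :=
  Kernel_isProbability.Build _ _ _ _ R (kPsi P mPsi t) (kPsi_prob P mPsi t).

Lemma second_moment (R : realType) d (E : measurableType d) dO (Omega : measurableType dO)
  (Pr : probability Omega R) (Psi : R -> Omega -> E) (P : R -> R.-pker E ~> E)
  (mu : probability E R) (V : E -> R) (A B : R) t :
  markov_process Pr Psi P mu -> measurable_fun setT V -> 0 <= A -> 0 <= B -> 0 <= t ->
  (forall x, (\int[P t x]_y ((V y) ^+ 2)%:E <= (A * (V x) ^+ 2 + B)%:E)%E) ->
  (\int[Pr]_w ((V (Psi t w)) ^+ 2)%:E <= A%:E * \int[mu]_x ((V x) ^+ 2)%:E + B%:E)%E.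
Proof.
move=> [mPsi law0 mk] mV A0 B0 t0 hb.
have mPsi0 : measurable_fun setT (Psi 0) by exact: mPsi.
have mV2 : measurable_fun setT (fun x => (V x ^+ 2)%:E).
  by apply/measurable_EFinP; exact: measurable_funX.
pose l := kprobability (measurable_cst (Pr : pprobability Omega R)
       : measurable_fun [set: unit] _).
have lawt U : measurable U ->
    Pr (Psi t @^-1` U) = kcomp l (kPsi P mPsi0 t) tt U.
  move=> mU.
  have := mk 0 t U setT (lexx 0) t0 mU.
  rewrite add0r setTI => ->; last first.
    by move=> M [[M0 MC _] _]; have := MC _ M0; rewrite setD0.
  by [].
rewrite -(@ge0_integral_pushforward _ _ _ _ _ _ (mPsi t t0) Pr setT
  (fun y => (V y ^+ 2)%:E)) //; last by move=> y _; rewrite lee_fin sqr_ge0.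
rewrite (eq_measure_integral (kcomp l (kPsi P mPsi0 t) tt)); last first.
  by move=> H U mU _; exact: lawt.
  exact: mPsi.
rewrite integral_kcomp //; last by move=> z; rewrite lee_fin sqr_ge0.
apply: le_trans (@le_int_nm _ _ _ Pr _ (fun w => (A * (V (Psi 0 w)) ^+ 2 + B)%:E) _ _) _.
- by move=> w; apply: integral_ge0 => y _; rewrite lee_fin sqr_ge0.
- by move=> w; exact: hb.
under eq_integral do rewrite EFinD.
rewrite ge0_integralD //; last 2 first.
- by move=> w _; rewrite lee_fin mulr_ge0 // sqr_ge0.
- apply/measurable_EFinP; apply: measurable_funM => //.
  exact: measurable_funX (measurableT_comp mV mPsi0).
under eq_integral do rewrite EFinM.
have Pr1 : (Pr : measure Omega R) setT = 1%E by exact: probability_setT.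
rewrite integral_cst // Pr1 mule1.
rewrite ge0_integralZl //; last 2 first.
- apply/measurable_EFinP; exact: measurable_funX (measurableT_comp mV mPsi0).
- by move=> w _; rewrite lee_fin sqr_ge0.
rewrite -(@ge0_integral_pushforward _ _ _ _ _ _ mPsi0 Pr setT
  (fun y => (V y ^+ 2)%:E)) //; last by move=> y _; rewrite lee_fin sqr_ge0.
rewrite (eq_measure_integral (mu : measure E R)) //.
by move=> U mU _; exact: law0.
Qed.

Unset Implicit Arguments. Set Strict Implicit.


Theorem lemma3p6 (R : realType) (d : measure_display) (E : measurableType d)
  (rho : E -> E -> R) (dO : measure_display) (Omega : measurableType dO)
  (Pr : probability Omega R) (Psi : R -> Omega -> E)
  (P : R -> R.-pker E ~> E) (mu mustar : probability E R)
  (V : E -> R) (g : E -> R) :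
  polish_borel rho ->
  transition_semigroup P ->
  markov_process Pr Psi P mu ->
  rcontinuous rho V -> (forall x, 0 <= V x) ->
  (* (a) *)
  invariant_meas P mustar ->
  (forall nu : probability E R, invariant_meas P nu ->
     forall A, measurable A -> nu A = mustar A) ->
  (exists gamma : R, 0 < gamma /\
   exists C : probability E R -> R,
     [/\ forall nu, 0 <= C nu,
         forall (nu : probability E R) t,
           (\int[nu]_x (V x)%:E < +oo)%E -> 0 <= t ->
           dFM rho (actP P nu t) mustar <= C nu * expR (- (gamma * t)) &
         exists2 kappa : R, 0 < kappa &
           forall x, C \d_x = kappa * Num.sqrt (V x + 1)]) ->
  (* (b) *)
  (exists A B Gamma : R, [/\ 0 <= A, 0 <= B, 0 < Gamma &
     forall x t, 0 <= t ->
       (\int[P t x]_y ((V y) ^+ 2)%:E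
          <= (A * expR (- (Gamma * t)) * (V x) ^+ 2 + B)%:E)%E]) ->
  (* (c) *)
  (\int[mu]_x ((V x) ^+ 2)%:E < +oo)%E ->
  lip_bounded rho g ->
  (\int[Pr]_w (`| Rres Psi P mustar g t w |)%:E)%E @[t --> +oo] --> 0%E.
Proof.
move=> [hmet _ _ hbor] _ hmp hVc hV0 _ _ [gam [gam0 [C [C0 hC [kap kap0 hCk]]]]]
  [A [B [Gam [A0 B0 Gam0 hb]]]] hc [[M hM] [L hL]].
have mV := @rcont_meas _ _ _ rho V hbor hVc.
have rho0 x y : 0 <= rho x y.
  case: hmet => h0 hs ht; have := ht x y x; rewrite (hs y x) (proj2 (h0 x x) erefl).
  lra.
pose c := Num.max 1 (Num.max M L).
have c1 : 1 <= c by rewrite le_max lexx.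
have c0 : 0 < c by lra.
have Mc : M <= c by rewrite /c !le_max lexx orbT.
have Lc : L <= c by rewrite /c !le_max lexx !orbT.
pose f := fun y => g y / c.
have gE : g = (fun y => c * f y).
  by apply/funext => y; rewrite /f mulrC divfK // gt_eqF.
have fb : bl_le1 rho f.
  split => [x|x y]; rewrite /f.
    by rewrite normrM normfV (gtr0_norm c0) ler_pdivrMr // mul1r (le_trans (hM x)).
  rewrite -mulrBl normrM normfV (gtr0_norm c0) ler_pdivrMr //.
  apply: le_trans (hL x y) _; rewrite mulrC ler_wpM2l //.
have gc : rcontinuous rho g.
  move=> x e e0; exists (e / c); first by rewrite divr_gt0.
  move=> y hy; apply: le_lt_trans (hL x y) _.
  apply: le_lt_trans (_ : c * rho x y < e); first by rewrite ler_wpM2r.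
  by rewrite mulrC -ltr_pdivlMr.
have mf : measurable_fun setT f.
  by apply: measurable_funM; [exact: (@rcont_meas _ _ _ rho g hbor gc) | exact: measurable_cst].
rewrite gE.
case: hmp => mPsi law0 mk.
have hPf x t : 0 <= t ->
    `|Pf P t (gbar mustar (fun y => c * f y)) x| <=
    c * kap * Num.sqrt (V x + 1) * expR (- (gam * t)).
  move=> t0.
  apply: le_trans (@Pf_bound _ _ _ rho P mustar f c t x (ltW c0) mf fb) _.
  rewrite -!mulrA ler_wpM2l ?(ltW c0) // mulrA -hCk.
  apply: hC => //.
  by rewrite integral_dirac // ?diracT ?mul1e ?ltry //; exact/measurable_EFinP.
pose K0 := c * kap / gam.
have K00 : 0 <= K0 by rewrite /K0 divr_ge0 ?mulr_ge0 // ltW.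
have hchi x : `|chi P mustar (fun y => c * f y) x| <= K0 * (V x ^+ 2 + 2).
  have := @exp_int_bound R (fun t => Pf P t (gbar mustar (fun y => c * f y)) x)
    (c * kap * Num.sqrt (V x + 1)) gam.
  have K1 : 0 <= c * kap * Num.sqrt (V x + 1) by rewrite !mulr_ge0 ?sqrtr_ge0 // ltW.
  move=> /(_ K1 gam0 (hPf x)) H.
  have H2 : `|chi P mustar (fun y => c * f y) x| <= c * kap * Num.sqrt (V x + 1) / gam by exact H.
  apply: le_trans H2 _.
  rewrite /K0 mulrAC; apply: ler_wpM2l => //.
  exact: sqrt_le_sq.
pose I := fine (\int[mu]_x ((V x) ^+ 2)%:E).
have Ifin : (\int[mu]_x ((V x) ^+ 2)%:E)%E = I%:E.
  rewrite /I fineK // ge0_fin_numE //.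
  by apply: integral_ge0 => x _; rewrite lee_fin sqr_ge0.
have hmom s : 0 <= s ->
    (\int[Pr]_w ((V (Psi s w)) ^+ 2)%:E <= (A * I + B)%:E)%E.
  move=> s0.
  have := @second_moment R d E dO Omega Pr Psi P mu V A B s
    (And3 mPsi law0 mk) mV A0 B0 s0.
  rewrite Ifin -EFinM -EFinD; apply => x.
  apply: le_trans (hb x s s0) _; rewrite lee_fin lerD2r.
  rewrite -mulrA ler_wpM2l // ler_piMl ?sqr_ge0 // expR_le1 oppr_le0.
  by rewrite mulr_ge0 // ltW.
pose m := A * I + B.
have HI t : 0 <= t ->
    (\int[Pr]_w (V (Psi 0 w) ^+ 2 + V (Psi t w) ^+ 2 + 4)%:E <= (2 * m + 4)%:E)%E.
  move=> t0.
  have mV0 : measurable_fun setT (fun w => V (Psi 0 w) ^+ 2).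
    exact: measurable_funX (measurableT_comp mV (mPsi 0 (lexx 0))).
  have mVt : measurable_fun setT (fun w => V (Psi t w) ^+ 2).
    exact: measurable_funX (measurableT_comp mV (mPsi t t0)).
  under eq_integral do rewrite EFinD.
  rewrite ge0_integralD //; last 2 first.
  - by move=> w _; rewrite lee_fin addr_ge0 ?sqr_ge0.
  - by apply/measurable_EFinP; exact: measurable_funD.
  under eq_integral do rewrite EFinD.
  rewrite ge0_integralD //.
  all: try (by move=> w _; rewrite lee_fin sqr_ge0).
  all: try (by apply/measurable_EFinP).
  have Pr1 : (Pr : measure Omega R) setT = 1%E by exact: probability_setT.
  rewrite integral_cst // Pr1 mule1.
  rewrite (_ : (2 * m + 4)%:E = (m%:E + m%:E) + 4%:E)%E; last first.
    by rewrite -!EFinD; congr EFin; lra.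
  by apply: leeD => //; apply: leeD; apply: hmom.
have hbound t : 0 < t ->
    (\int[Pr]_w (`| Rres Psi P mustar (fun y => c * f y) t w |)%:E <=
     ((Num.sqrt t)^-1 * K0 * (2 * m + 4))%:E)%E.
  move=> t0.
  have k0 : 0 <= (Num.sqrt t)^-1 * K0 by rewrite mulr_ge0 // invr_ge0 sqrtr_ge0.
  apply: le_trans (@le_int_nm _ _ _ Pr _ (fun w => ((Num.sqrt t)^-1 * K0 *
     (V (Psi 0 w) ^+ 2 + V (Psi t w) ^+ 2 + 4))%:E) _ _) _.
  - by move=> w; rewrite lee_fin normr_ge0.
  - move=> w; rewrite lee_fin /Rres normrM ger0_norm ?invr_ge0 ?sqrtr_ge0 //.
    rewrite -mulrA ler_wpM2l ?invr_ge0 ?sqrtr_ge0 //.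
    apply: le_trans (ler_normB _ _) _.
    have := hchi (Psi 0 w); have := hchi (Psi t w); nra.
  under eq_integral do rewrite EFinM.
  rewrite ge0_integralZl //; last 2 first.
  - apply/measurable_EFinP; apply: measurable_funD => //.
    apply: measurable_funD => //.
      exact: measurable_funX (measurableT_comp mV (mPsi 0 (lexx 0))).
    exact: measurable_funX (measurableT_comp mV (mPsi t (ltW t0))).
  - by move=> w _; rewrite lee_fin !addr_ge0 ?sqr_ge0.
  have k0' : (0 <= ((Num.sqrt t)^-1 * K0)%:E)%E by rewrite lee_fin.
  rewrite EFinM; exact: (lee_wpmul2l k0' (HI t (ltW t0))).
apply: (@squeeze_cvge _ _ _ _ (fun=> 0%E) _
  (fun t => ((Num.sqrt t)^-1 * (K0 * (2 * m + 4)))%:E)).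
- exists 0; split; first by rewrite num_real.
  move=> t t0 /=; apply/andP; split.
    by apply: integral_ge0 => w _; rewrite lee_fin normr_ge0.
  by rewrite mulrA; exact: hbound.
- exact: cvg_cst.
- exact: lim_inv_sqrt.
Qed.
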